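(* Let $\mathbf{M}_1,\dots,\mathbf{M}_L$ be nonsingular $D\times D$ integer matrices and $\mathbf{R}$ an lcrm of them. Suppose there exist pairwise commutative and coprime integer matrices $\mathbf{N}_1,\dots,\mathbf{N}_L$ and a unimodular matrix $\mathbf{U}$ such that $\mathbf{R}=\mathbf{N}_1\mathbf{N}_2\cdots\mathbf{N}_L\mathbf{U}$ and $\mathbf{N}_i$ is a left divisor of $\mathbf{M}_i$ for each $i$. Let $\mathbf{W}_i=\mathbf{N}_1\cdots\mathbf{N}_{i-1}\mathbf{N}_{i+1}\cdots\mathbf{N}_L$. For each $i$ such that $\mathbf{N}_i$ is not unimodular there exist integer matrices $\widehat{\mathbf{W}}_i,\mathbf{Q}_i$ with $\mathbf{W}_i\widehat{\mathbf{W}}_i+\mathbf{N}_i\mathbf{Q}_i=\mathbf{I}$; fix such $\widehat{\mathbf{W}}_i$, and set $\widehat{\mathbf{W}}_i=\mathbf{0}$ if $\mathbf{N}_i$ is unimodular. Then for every $\mathbf{m}\in\mathcal{N}(\mathbf{R})$ with remainders $\mathbf{r}_i=\langle\mathbf{m}\rangle_{\mathbf{M}_i}$, $$\mathbf{m}=\Big\langle\sum_{i=1}^L\mathbf{W}_i\widehat{\mathbf{W}}_i\mathbf{r}_i\Big\rangle_{\mathbf{R}}.$$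
   Context: All matrices are $D\times D$ integer matrices; $\mathbf{I}$ is the identity. Unimodular: integer with determinant $\pm1$. $\mathbf{A}$ is a left divisor of $\mathbf{M}$ if $\mathbf{A}^{-1}\mathbf{M}$ is an integer matrix. Commuting nonsingular integer matrices are coprime if all their common left (equivalently right) divisors are unimodular. An lcrm of $\mathbf{M}_1,\dots,\mathbf{M}_L$ is a nonsingular integer $\mathbf{R}$ with $\mathbf{R}=\mathbf{M}_i\mathbf{P}_i$ ($\mathbf{P}_i$ integer) for all $i$ such that every such common right multiple equals $\mathbf{R}\mathbf{A}$ for some integer $\mathbf{A}$. For nonsingular integer $\mathbf{M}$, $\mathcal{N}(\mathbf{M})=\{\mathbf{k}\in\mathbb{Z}^D:\mathbf{k}=\mathbf{M}\mathbf{x},\ \mathbf{x}\in[0,1)^D\}$, and $\langle\mathbf{m}\rangle_{\mathbf{M}}$ is the unique $\mathbf{r}\in\mathcal{N}(\mathbf{M})$ with $\mathbf{m}-\mathbf{r}\in\{\mathbf{M}\mathbf{n}:\mathbf{n}\in\mathbb{Z}^D\}$. *)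

(* Defs.v *)
From HB Require Import structures.
From mathcomp Require Import all_boot all_order all_algebra.
Set Implicit Arguments. Unset Strict Implicit. Unset Printing Implicit Defensive.
Import Order.TTheory GRing.Theory Num.Theory.
Local Open Scope ring_scope.

Notation imx D := 'M[int]_D.
Notation ivec D := 'cV[int]_D.

Definition nonsingular D (M : imx D) : Prop := \det M != 0.

Definition unimodular D (M : imx D) : Prop := (\det M = 1) \/ (\det M = -1).

Definition left_divisor D (A M : imx D) : Prop :=
  nonsingular A /\ exists P : imx D, M = A *m P.

Definition mx_coprime D (A B : imx D) : Prop :=
  forall C : imx D, left_divisor C A -> left_divisor C B -> unimodular C.

Definition is_lcrm D L (M : 'I_L -> imx D) (R : imx D) : Prop :=
  nonsingular R /\
  (forall i, exists P : imx D, R = M i *m P) /\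
  (forall S : imx D, (forall i, exists P : imx D, S = M i *m P) ->
     exists A : imx D, S = R *m A).

Definition int2rat_mx m n (A : 'M[int]_(m, n)) : 'M[rat]_(m, n) :=
  map_mx (fun z : int => z%:~R) A.

(* k \in N(M): k = M x with x \in [0,1)^D.  Since M is nonsingular and k is
   integral, x = M^{-1} k is necessarily rational, so x ranges over Q^D. *)
Definition inN D (M : imx D) (k : ivec D) : Prop :=
  exists x : 'cV[rat]_D,
    (forall j, 0 <= x j 0 /\ x j 0 < 1) /\
    int2rat_mx k = int2rat_mx M *m x.

(* r = <m>_M : r \in N(M) and m - r \in M Z^D  (r is unique for nonsingular M) *)
Definition is_rem D (M : imx D) (m r : ivec D) : Prop :=
  inN M r /\ exists n : ivec D, m - r = M *m n.

Definition prodmx D (s : seq (imx D)) : imx D := foldr mulmx 1%:M s.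

Definition prodN D L (N : 'I_L -> imx D) : imx D :=
  prodmx [seq N j | j <- enum 'I_L].

Definition Wmx D L (N : 'I_L -> imx D) (i : 'I_L) : imx D :=
  prodmx [seq N j | j <- enum 'I_L & j != i].

(* Main.v *)
Require Import Defs.
From HB Require Import structures.
From mathcomp Require Import all_boot all_order all_algebra.
Import Order.TTheory GRing.Theory Num.Theory.
Local Open Scope ring_scope.
Set Implicit Arguments. Unset Strict Implicit.

Lemma unimod_unit D (A : 'M[int]_D) : unimodular A -> A \in unitmx.
Proof. by rewrite unitmxE; case=> ->; rewrite ?unitr1 ?unitrN1. Qed.

Lemma right_bez D (A B X Y : 'M[int]_D) :
  A *m B = B *m A -> \det A != 0 -> A *m X + B *m Y = 1%:M ->
  exists C E : 'M[int]_D, X *m A - B *m C = 1%:M /\ X *m B = B *m E.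
Proof.
move=> cAB dA bez.
pose T := block_mx X (- B) Y A : 'M[int]_(D + D).
have hT : block_mx A B 0 1%:M *m T = block_mx 1%:M 0 Y A.
  rewrite mulmx_block !mul0mx !mul1mx !add0r bez mulmxN cAB addNr //.
have dT : \det T = 1.
  have := congr1 determinant hT.
  rewrite det_mulmx det_ublock det_lblock det1 mulr1 mul1r => e.
  by apply: (mulfI dA); rewrite e mulr1.
have uT : T \in unitmx by rewrite unitmxE dT unitr1.
have hr : row_mx A B *m T = row_mx 1%:M 0.
  by rewrite mul_row_block bez mulmxN cAB addNr.
have e1 : row_mx A B = row_mx 1%:M 0 *m invmx T.
  by rewrite -hr -mulmxA mulmxV // mulmx1.
have e2 := mulmxV uT.
rewrite -[invmx T]submxK in e1 e2.
rewrite mul_row_block !mul1mx !mul0mx !addr0 in e1.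
case/eq_row_mx: e1 => eA eB.
rewrite mulmx_block scalar_mx_block in e2.
case/eq_block_mx: e2 => e11 e12 _ _.
exists (dlsubmx (invmx T)), (drsubmx (invmx T)); split.
  by rewrite eA -e11 mulNmx.
by apply/eqP; rewrite -subr_eq0 -mulNmx; apply/eqP; rewrite -e12 eB.
Qed.

Lemma inter2 D (A B X Y : 'M[int]_D) (x a b : 'cV[int]_D) :
  A *m B = B *m A -> \det A != 0 -> A *m X + B *m Y = 1%:M ->
  x = A *m a -> x = B *m b -> exists c, x = A *m B *m c.
Proof.
move=> cAB dA bez xa xb.
have [C [E [e1 e2]]] := right_bez cAB dA bez.
have ha : a = B *m (E *m b - C *m a).
  rewrite mulmxBr !mulmxA -e2 -!mulmxA -xb xa !mulmxA -mulmxBl e1 mul1mx //.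
by exists (E *m b - C *m a); rewrite -mulmxA -ha.
Qed.

Definition bez D (A B : 'M[int]_D) := exists X Y : 'M[int]_D, A *m X + B *m Y = 1%:M.

Lemma bez_of_coprime D (A B : 'M[int]_D) :
  \det A != 0 -> mx_coprime A B -> bez A B.
Proof.
move=> dA cop.
have [Lm uL [Rm uR [d _ eM]]] := int_Smith_normal_form (row_mx A B).
set Dl := \matrix_(i, j) _ in eM.
have rD : rsubmx Dl = 0.
  apply/matrixP => i j; rewrite !mxE /=.
  have -> : (i == D + j :> nat) = false.
    by apply/negbTE; rewrite neq_ltn (leq_trans (ltn_ord i)) ?leq_addr.
  by rewrite mulr0n.
pose G := Lm *m lsubmx Dl.
have eM2 : row_mx A B = G *m usubmx Rm.
  rewrite eM -[Dl]hsubmxK rD mul_mx_row mulmx0 -[Rm]vsubmxK mul_row_col.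
  by rewrite mul0mx addr0 col_mxKu.
have eG : row_mx G 0 = row_mx A B *m invmx Rm.
  by rewrite eM -mulmxA mulmxV // mulmx1 -[Dl]hsubmxK rD mul_mx_row mulmx0.
pose Z := invmx Rm *m col_mx 1%:M (0 : 'M[int]_(D, D)).
have eG2 : G = A *m usubmx Z + B *m dsubmx Z.
  rewrite -mul_row_col vsubmxK /Z mulmxA -eG mul_row_col mulmx1 mul0mx addr0 //.
have eA : A = G *m lsubmx (usubmx Rm) by rewrite mulmx_lsub -eM2 row_mxKl.
have eB : B = G *m rsubmx (usubmx Rm) by rewrite mulmx_rsub -eM2 row_mxKr.
have dG : \det G != 0.
  by apply: contraNneq dA => h; rewrite eA (det_mulmx G) h mul0r.
have uG : G \in unitmx.
  apply: unimod_unit; apply: cop; split=> //.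
    by exists (lsubmx (usubmx Rm)).
  by exists (rsubmx (usubmx Rm)).
exists (usubmx Z *m invmx G), (dsubmx Z *m invmx G).
by rewrite !mulmxA -mulmxDl -eG2 mulmxV.
Qed.

Lemma bez_mul D (A B C : 'M[int]_D) :
  A *m B = B *m A -> bez A B -> bez A C -> bez A (B *m C).
Proof.
move=> cAB [X [Y e1]] [X' [Y' e2]].
exists (X + B *m X' *m Y), (Y' *m Y).
transitivity (A *m X + B *m Y); last exact e1.
rewrite mulmxDr -addrA; congr (_ + _).
have -> : B *m Y = B *m (A *m X' + C *m Y') *m Y by rewrite e2 mulmx1.
by rewrite mulmxDr mulmxDl !mulmxA cAB.
Qed.

Lemma prod_comm D L (N : 'I_L -> 'M[int]_D) i (s : seq 'I_L) :
  (forall j, j \in s -> N i *m N j = N j *m N i) ->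
  N i *m prodmx (map N s) = prodmx (map N s) *m N i.
Proof.
elim: s => [|j s IH] h /=; first by rewrite mulmx1 mul1mx.
rewrite mulmxA h ?mem_head // -!mulmxA IH // => k ks.
by apply: h; rewrite in_cons ks orbT.
Qed.

Lemma prod_bez D L (N : 'I_L -> 'M[int]_D) i (s : seq 'I_L) :
  (forall j, j \in s -> N i *m N j = N j *m N i /\ bez (N i) (N j)) ->
  bez (N i) (prodmx (map N s)).
Proof.
elim: s => [|j s IH] h /=.
  by exists 0, 1%:M; rewrite mulmx0 add0r mulmx1.
have [c b] := h j (mem_head _ _).
apply: bez_mul => //; apply: IH => k ks.
by apply: h; rewrite in_cons ks orbT.
Qed.

Lemma prod_pull D L (N : 'I_L -> 'M[int]_D) j (s : seq 'I_L) :
  j \in s -> (forall k, k \in s -> N k *m N j = N j *m N k) ->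
  exists P, prodmx (map N s) = N j *m P.
Proof.
elim: s => [|k s IH] //= js h.
case: (eqVneq k j) => [->|kj]; first by exists (prodmx (map N s)).
have js' : j \in s by move: js; rewrite in_cons eq_sym (negbTE kj).
have [P eP] : exists P, prodmx (map N s) = N j *m P.
  by apply: IH => // k' ks; apply: h; rewrite in_cons ks orbT.
exists (N k *m P); rewrite eP !mulmxA h ?mem_head //.
Qed.

Lemma prod_inter D L (N : 'I_L -> 'M[int]_D) (s : seq 'I_L) :
  uniq s ->
  (forall i j, i \in s -> j \in s -> i != j ->
     N i *m N j = N j *m N i /\ bez (N i) (N j)) ->
  (forall j, j \in s -> \det (N j) != 0) ->
  forall x : 'cV[int]_D, (forall j, j \in s -> exists c, x = N j *m c) ->
  exists c, x = prodmx (map N s) *m c.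
Proof.
elim: s => [|j s IH] /=.
  by move=> _ _ _ x _; exists x; rewrite mul1mx.
case/andP=> js us h hd x hx.
have sub : forall k, k \in s -> k \in j :: s by move=> k ks; rewrite in_cons ks orbT.
have [c' ec'] := IH us (fun a b a1 b1 => h a b (sub a a1) (sub b b1))
  (fun k ks => hd k (sub k ks)) x (fun k ks => hx k (sub k ks)).
have [a ea] := hx j (mem_head _ _).
have hjk : forall k, k \in s -> N j *m N k = N k *m N j /\ bez (N j) (N k).
  move=> k ks; apply: h; rewrite ?mem_head ?sub //.
  by apply: contraNneq js => ->.
have [X [Y eb]] := prod_bez hjk.
have [c ec] := inter2 (prod_comm (fun k ks => (hjk k ks).1))
  (hd j (mem_head _ _)) eb ea ec'.
by exists c; rewrite ec.
Qed.
Unset Implicit Arguments. Set Strict Implicit.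

Theorem corollary1 (D L : nat) (M : 'I_L -> 'M[int]_D) (R : 'M[int]_D)
    (N : 'I_L -> 'M[int]_D) (U : 'M[int]_D) :
  (forall i, nonsingular (M i)) ->
  is_lcrm M R ->
  (forall i j, i != j -> N i *m N j = N j *m N i /\ mx_coprime (N i) (N j)) ->
  unimodular U ->
  R = prodN N *m U ->
  (forall i, left_divisor (N i) (M i)) ->
  (forall i, ~ unimodular (N i) ->
     exists Wh Q : 'M[int]_D, Wmx N i *m Wh + N i *m Q = 1%:M) /\
  (forall Wh : 'I_L -> 'M[int]_D,
     (forall i, unimodular (N i) -> Wh i = 0) ->
     (forall i, ~ unimodular (N i) ->
        exists Q : 'M[int]_D, Wmx N i *m Wh i + N i *m Q = 1%:M) ->
     forall (m : 'cV[int]_D) (r : 'I_L -> 'cV[int]_D),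
       inN R m ->
       (forall i, is_rem (M i) m (r i)) ->
       is_rem R (\sum_(i < L) Wmx N i *m Wh i *m r i) m).
Proof.
move=> _ _ hNN hU hR hdiv.
have dN : forall j, \det (N j) != 0 by move=> j; case: (hdiv j).
have hNN' : forall i j, i != j -> N i *m N j = N j *m N i /\ bez (N i) (N j).
  move=> i j ij; have [c cop] := hNN i j ij; split=> //.
  exact: bez_of_coprime (dN i) cop.
have commW : forall i k, N k *m N i = N i *m N k.
  move=> i k; case: (eqVneq k i) => [->//|ki]; exact: (hNN k i ki).1.
have bezW : forall i, bez (N i) (Wmx N i).
  move=> i; rewrite /Wmx; apply: prod_bez => j.
  by rewrite mem_filter => /andP[ji _]; apply: hNN'; rewrite eq_sym.
split.
  move=> i _; have [X [Y e]] := bezW i.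
  by exists Y, X; rewrite addrC.
move=> Wh hWh0 hWhQ m r hm hr; split=> //.
have hQ : forall j, exists Q, Wmx N j *m Wh j + N j *m Q = 1%:M.
  move=> j.
  have [hu|hu] : unimodular (N j) \/ ~ unimodular (N j).
    case: (eqVneq (\det (N j)) 1) => e1; first by left; left.
    case: (eqVneq (\det (N j)) (-1)) => e2; first by left; right.
    by right; case=> /eqP; [rewrite (negbTE e1) | rewrite (negbTE e2)].
    exists (invmx (N j)); rewrite hWh0 // mulmx0 add0r mulmxV //.
    exact: unimod_unit.
  exact: hWhQ.
set S := \sum_(i < L) _.
have hall : forall j, j \in enum 'I_L -> exists c, S - m = N j *m c.
  move=> j _.
  have [Q eQ] := hQ j.
  have [[P eP] [n en]] := ((hdiv j).2, (hr j).2).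
  have h1 : Wmx N j *m Wh j *m r j - m = N j *m (- (P *m n) - Q *m r j).
    have e1 : Wmx N j *m Wh j = 1%:M - N j *m Q by rewrite -eQ addrK.
    rewrite e1 mulmxBl mul1mx mulmxBr mulmxN !mulmxA -eP -en opprB.
    by rewrite addrAC.
  have h2 : exists c, \sum_(i < L | i != j) Wmx N i *m Wh i *m r i = N j *m c.
    apply: (big_ind (fun x => exists c, x = N j *m c)).
    - by exists 0; rewrite mulmx0.
    - by move=> x y [cx ->] [cy ->]; exists (cx + cy); rewrite mulmxDr.
    move=> i ij.
    have [P' eP'] : exists P', Wmx N i = N j *m P'.
      rewrite /Wmx; apply: prod_pull.
        by rewrite mem_filter eq_sym ij mem_enum.
      by move=> k _; exact: commW.
    by exists (P' *m Wh i *m r i); rewrite eP' !mulmxA.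
  have [c2 ec2] := h2.
  exists (c2 + (- (P *m n) - Q *m r j)).
  by rewrite /S (bigD1 j) //= mulmxDr -ec2 -h1 [LHS]addrAC [LHS]addrC.
have [c ec] := prod_inter (enum_uniq _)
  (fun i j _ _ ij => hNN' i j ij) (fun j _ => dN j) hall.
have uU := unimod_unit hU.
exists (invmx U *m c).
by rewrite hR ec /prodN -!mulmxA (mulmxA U) mulmxV // mul1mx.
Qed.
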